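(* A ring $R$ is feckly clean if and only if both of the following hold: (1) $\operatorname{Max}(R)$ is strongly zero-dimensional; (2) for any two distinct maximal ideals $M$ and $N$ of $R$ there exist $a,b\in R$ such that $a\notin M$, $b\notin N$ and $aRb\subseteq J(R)$.
   Context: Rings are associative with identity, not necessarily commutative; ideals are two-sided; $J(R)$ is the Jacobson radical. An element $u\in R$ is full if $RuR=R$. An element $a\in R$ is feckly clean if there exist $e\in R$ and a full element $u\in R$ with $a=e+u$ and $eR(1-e)\subseteq J(R)$; $R$ is feckly clean if every element is feckly clean. $\operatorname{Max}(R)$ is the set of all maximal ideals of $R$, topologized so that the closed sets are exactly the sets $V(I)=\{P\in\operatorname{Max}(R): I\subseteq P\}$ for ideals $I$. A topological space $X$ is strongly zero-dimensional if for any two disjoint closed sets $A,B\subseteq X$ there exist disjoint clopen sets $C_1,C_2$ with $A\subseteq C_1$ and $B\subseteq C_2$. *)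

(* Defs.v *)
From HB Require Import structures.
From mathcomp Require Import all_boot all_order all_algebra.
Set Implicit Arguments. Unset Strict Implicit. Unset Printing Implicit Defensive.
Import GRing.Theory.
Local Open Scope ring_scope.

Section Defs.
Variable R : pzRingType.

Definition subsetR (I K : R -> Prop) : Prop := forall x, I x -> K x.

Definition is_ideal (I : R -> Prop) : Prop :=
  [/\ I 0, (forall x y, I x -> I y -> I (x - y)),
      (forall r x, I x -> I (r * x)) & (forall r x, I x -> I (x * r))].

Definition is_left_ideal (I : R -> Prop) : Prop :=
  [/\ I 0, (forall x y, I x -> I y -> I (x - y)) & (forall r x, I x -> I (r * x))].

Definition maximal_ideal (M : R -> Prop) : Prop :=
  [/\ is_ideal M, ~ M 1 &
      forall I, is_ideal I -> subsetR M I -> subsetR I M \/ I 1].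

Definition maximal_left_ideal (M : R -> Prop) : Prop :=
  [/\ is_left_ideal M, ~ M 1 &
      forall I, is_left_ideal I -> subsetR M I -> subsetR I M \/ I 1].

Definition jacobson (x : R) : Prop :=
  forall M, maximal_left_ideal M -> M x.

(* u is full: RuR = R, i.e. the two-sided ideal RuR (finite sums of r u s)
   is all of R, equivalently contains 1. *)
Definition full (u : R) : Prop :=
  exists s : seq (R * R), \sum_(p <- s) p.1 * u * p.2 = 1.

Definition feckly_clean_elt (a : R) : Prop :=
  exists e u : R, [/\ a = e + u, full u & forall r, jacobson (e * r * (1 - e))].

Definition feckly_clean : Prop := forall a : R, feckly_clean_elt a.

Definition MaxSpec : Type := {M : R -> Prop | maximal_ideal M}.

Definition max_closed (S : MaxSpec -> Prop) : Prop :=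
  exists I, is_ideal I /\ forall P : MaxSpec, S P <-> subsetR I (proj1_sig P).

End Defs.

Definition strongly_zero_dimensional (X : Type) (closed : (X -> Prop) -> Prop) : Prop :=
  forall A B : X -> Prop, closed A -> closed B -> (forall x, ~ (A x /\ B x)) ->
  exists C1 C2 : X -> Prop,
    [/\ closed C1 /\ closed (fun x => ~ C1 x),
        closed C2 /\ closed (fun x => ~ C2 x),
        (forall x, ~ (C1 x /\ C2 x)),
        (forall x, A x -> C1 x) & (forall x, B x -> C2 x)].

(* Main.v *)
Require Import Defs.
From mathcomp Require Import all_boot all_order all_algebra.
From mathcomp Require Import boolp classical_sets.
Set Implicit Arguments. Unset Strict Implicit. Unset Printing Implicit Defensive.
Import GRing.Theory.
Local Open Scope ring_scope.

Lemma zorn_gen (T : Type) (good : (T -> Prop) -> Prop) (I : T -> Prop) :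
  good I ->
  (forall C : (T -> Prop) -> Prop, (forall P, C P -> good P) ->
     (forall P Q, C P -> C Q -> (forall x, P x -> Q x) \/ (forall x, Q x -> P x)) ->
     (exists P, C P) -> good (fun x => exists P, C P /\ P x)) ->
  exists M, [/\ good M, (forall x, I x -> M x) &
    (forall N, good N -> (forall x, M x -> N x) -> forall x, N x -> M x)].
Proof.
move=> gI gC.
pose P (X : set T) := good (fun x => I x \/ X x).
have [|A [PA Amax]] := @Zorn_bigcup T P.
  move=> F FP Ftot; rewrite /P.
  case: (pselect (exists X, F X)) => [[X0 FX0]|nF].
    have -> : (fun x => I x \/ (bigcup F id) x) =
      (fun x => exists Y, (fun Y => exists X, F X /\ Y = (fun x => I x \/ X x)) Y /\ Y x).
      apply: funext => x; apply: propext; split.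
        case=> [Ix|[X FX Xx]].
          by exists (fun x => I x \/ X0 x); split; [exists X0|left].
        by exists (fun x => I x \/ X x); split; [exists X|right].
      by case=> Y [[X [FX ->]]] [Ix|Xx]; [left|right; exists X].
    apply: gC.
    - by move=> Y [X [FX ->]]; apply: FP.
    - move=> Y Z [X [FX ->]] [X' [FX' ->]].
      case: (Ftot X X' FX FX') => h; [left|right] => x [Ix|Xx]; by [left|right; apply: h].
    - by exists (fun x => I x \/ X0 x), X0.
  have -> : (fun x => I x \/ (bigcup F id) x) = I; last by [].
  apply: funext => x; apply: propext; split; last by left.
  by case=> // [[X FX _]]; case: nF; exists X.
exists (fun x => I x \/ A x); split => //; first by move=> x; left.
move=> N gN AN x Nx.
case: (pselect (A x)) => [|nAx]; first by right.
exfalso; apply: (Amax N).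
  split; first by move=> y Ay; apply: AN; right.
  by move=> NA; apply: nAx; apply: NA.
rewrite /P; have -> : (fun x => I x \/ N x) = N; last by [].
apply: funext => y; apply: propext; split; last by right.
by case=> // Iy; apply: AN; left.
Qed.
Section Ring.
Variable R : pzRingType.
Implicit Types (I K M N L : R -> Prop) (x y z r s a b c e u : R).
Local Notation J := (@jacobson R).

Lemma id0 I : is_ideal I -> I 0. Proof. by case. Qed.
Lemma idB I x y : is_ideal I -> I x -> I y -> I (x - y). Proof. by case=> _ h _ _; apply: h. Qed.
Lemma idL I r x : is_ideal I -> I x -> I (r * x). Proof. by case=> _ _ h _; apply: h. Qed.
Lemma idR I r x : is_ideal I -> I x -> I (x * r). Proof. by case=> _ _ _ h; apply: h. Qed.
Lemma idN I x : is_ideal I -> I x -> I (- x).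
Proof. by move=> hI hx; rewrite -sub0r; apply: idB => //; apply: id0. Qed.
Lemma idD I x y : is_ideal I -> I x -> I y -> I (x + y).
Proof. by move=> hI hx hy; rewrite -[y]opprK; apply: idB => //; apply: idN. Qed.
Lemma idLR I r x s : is_ideal I -> I x -> I (r * x * s).
Proof. by move=> hI hx; apply: idR => //; apply: idL. Qed.

Lemma lid0 L : is_left_ideal L -> L 0. Proof. by case. Qed.
Lemma lidB L x y : is_left_ideal L -> L x -> L y -> L (x - y). Proof. by case=> _ h _; apply: h. Qed.
Lemma lidL L r x : is_left_ideal L -> L x -> L (r * x). Proof. by case=> _ _ h; apply: h. Qed.
Lemma lidN L x : is_left_ideal L -> L x -> L (- x).
Proof. by move=> hI hx; rewrite -sub0r; apply: lidB => //; apply: lid0. Qed.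
Lemma lidD L x y : is_left_ideal L -> L x -> L y -> L (x + y).
Proof. by move=> hI hx hy; rewrite -[y]opprK; apply: lidB => //; apply: lidN. Qed.

Lemma max_ideal_exists I : is_ideal I -> ~ I 1 ->
  exists M, maximal_ideal M /\ subsetR I M.
Proof.
move=> hI n1.
have [C gC tC neC|M [[hM nM1] IM Mmax]] := @zorn_gen R (fun X => is_ideal X /\ ~ X 1) I (conj hI n1); last first.
  exists M; split => //; split => // N hN MN.
  case: (pselect (N 1)) => [|nN1]; [by right|left].
  by apply: Mmax.
case: neC => P0 CP0; split; last by case=> P [CP P1]; case: (gC P CP).
split.
- by exists P0; split => //; apply: id0; case: (gC P0 CP0).
- move=> x y [P [CP Px]] [Q [CQ Qy]].
  case: (tC P Q CP CQ) => h.
    by exists Q; split => //; apply: idB => //; [case: (gC Q CQ)|apply: h].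
  by exists P; split => //; apply: idB => //; [case: (gC P CP)|apply: h].
- by move=> r x [P [CP Px]]; exists P; split => //; apply: idL => //; case: (gC P CP).
- by move=> r x [P [CP Px]]; exists P; split => //; apply: idR => //; case: (gC P CP).
Qed.

Lemma max_left_exists L : is_left_ideal L -> ~ L 1 ->
  exists M, maximal_left_ideal M /\ subsetR L M.
Proof.
move=> hI n1.
have [C gC tC neC|M [[hM nM1] IM Mmax]] := @zorn_gen R (fun X => is_left_ideal X /\ ~ X 1) L (conj hI n1); last first.
  exists M; split => //; split => // N hN MN.
  case: (pselect (N 1)) => [|nN1]; [by right|left].
  by apply: Mmax.
case: neC => P0 CP0; split; last by case=> P [CP P1]; case: (gC P CP).
split.
- by exists P0; split => //; apply: lid0; case: (gC P0 CP0).
- move=> x y [P [CP Px]] [Q [CQ Qy]].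
  case: (tC P Q CP CQ) => h.
    by exists Q; split => //; apply: lidB => //; [case: (gC Q CQ)|apply: h].
  by exists P; split => //; apply: lidB => //; [case: (gC P CP)|apply: h].
- by move=> r x [P [CP Px]]; exists P; split => //; apply: lidL => //; case: (gC P CP).
Qed.

Lemma J_left : is_left_ideal J.
Proof.
split.
- by move=> M hM; apply: lid0; case: hM.
- by move=> x y hx hy M hM; apply: lidB; [case: hM|apply: hx|apply: hy].
- by move=> r x hx M hM; apply: lidL; [case: hM|apply: hx].
Qed.

Lemma J_inv j : J j -> exists c, c * (1 - j) = 1.
Proof.
move=> hj; apply: contrapT => nex.
pose L := fun x => exists r, x = r * (1 - j).
have hL : is_left_ideal L.
  split.
  - by exists 0; rewrite mul0r.
  - by move=> x y [r ->] [r' ->]; exists (r - r'); rewrite mulrBl.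
  - by move=> s x [r ->]; exists (s * r); rewrite mulrA.
have [|M [hMM LM]] := max_left_exists hL.
  by case=> r e1; apply: nex; exists r.
case: (hMM) => hM nM1 _.
apply: nM1; have -> : (1 : R) = (1 - j) + j by rewrite subrK.
apply: lidD => //; last by apply: hj.
by apply: LM; exists 1; rewrite mul1r.
Qed.

Lemma trick a b c : c * (1 - b * a) = 1 -> (1 + a * c * b) * (1 - a * b) = 1.
Proof.
move=> h.
have E : a * (c * (1 - b * a)) * b = a * c * b - a * c * b * (a * b).
  by rewrite mulrBr mulr1 mulrBr mulrBl !mulrA.
rewrite h mulr1 in E.
by rewrite mulrDl mul1r mulrBr mulr1 -E addrNK.
Qed.

Lemma J_right x s : J x -> J (x * s).
Proof.
move=> hx M hM; apply: contrapT => nxs.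
case: (hM) => hL nM1 Mmax.
pose L' := fun y => exists l r, M l /\ y = l + r * (x * s).
have hL' : is_left_ideal L'.
  split.
  - by exists 0, 0; split; [apply: lid0|rewrite mul0r addr0].
  - move=> y z [l [r [Ml ->]]] [l' [r' [Ml' ->]]].
    exists (l - l'), (r - r'); split; first by apply: lidB.
    by rewrite mulrBl opprD addrACA.
  - move=> t y [l [r [Ml ->]]]; exists (t * l), (t * r); split; first by apply: lidL.
    by rewrite mulrDr mulrA.
have [L'M|[l [r [Ml e1]]]] := Mmax L' hL' (fun l Ml => ex_intro _ l (ex_intro _ 0 (conj Ml (esym (etrans (congr1 _ (mul0r _)) (addr0 _)))))).
  by apply: nxs; apply: L'M; exists 0, 1; split; [apply: lid0|rewrite mul1r add0r].
have [c hc] := J_inv (lidL (s * r) J_left hx).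
have := trick (a := r * x) (b := s) (c := c); rewrite -!mulrA mulrA => /(_ hc).
have -> : 1 - r * (x * s) = l by rewrite e1 addrK.
move=> e2; apply: nM1; rewrite -e2; exact: lidL.
Qed.
Lemma J_ideal : is_ideal J.
Proof.
case: J_left => h0 hB hL; split => // r x hx; exact: J_right.
Qed.

Definition sumI I K := fun x => exists a b, [/\ I a, K b & x = a + b].

Lemma sumI_ideal I K : is_ideal I -> is_ideal K -> is_ideal (sumI I K).
Proof.
move=> hI hK; split.
- by exists 0, 0; split; [apply: id0|apply: id0|rewrite addr0].
- move=> x y [a [b [Ia Kb ->]]] [a' [b' [Ia' Kb' ->]]].
  exists (a - a'), (b - b'); split; try apply: idB => //.
  by rewrite opprD addrACA.
- move=> r x [a [b [Ia Kb ->]]]; exists (r * a), (r * b); split; try apply: idL => //.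
  by rewrite mulrDr.
- move=> r x [a [b [Ia Kb ->]]]; exists (a * r), (b * r); split; try apply: idR => //.
  by rewrite mulrDl.
Qed.

Lemma sumI_l I K x : is_ideal K -> I x -> sumI I K x.
Proof. by move=> hK Ix; exists x, 0; split => //; [apply: id0|rewrite addr0]. Qed.
Lemma sumI_r I K x : is_ideal I -> K x -> sumI I K x.
Proof. by move=> hI Kx; exists 0, x; split => //; [apply: id0|rewrite add0r]. Qed.

Lemma max_not1 M : maximal_ideal M -> ~ M 1. Proof. by case. Qed.
Lemma max_id M : maximal_ideal M -> is_ideal M. Proof. by case. Qed.

Lemma max_compl M x : maximal_ideal M -> M x -> M (1 - x) -> False.
Proof.
move=> hM hx h1; apply: (max_not1 hM).
by rewrite -(subrK x 1); apply: idD => //; apply: max_id.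
Qed.

Lemma max_grow M I x : maximal_ideal M -> is_ideal I -> subsetR M I -> I x -> ~ M x -> I 1.
Proof. by case=> _ _ h hI MI Ix nMx; case: (h I hI MI) => // /(_ x Ix). Qed.

Lemma J_sub_max M x : maximal_ideal M -> J x -> M x.
Proof.
move=> hM hx; apply: contrapT => nMx.
have hM' := max_id hM.
have [a [b [Ma Jb e1]]] := max_grow hM (sumI_ideal hM' J_ideal)
  (fun y My => sumI_l J_ideal My) (sumI_r (K:=J) hM' hx) nMx.
have [c hc] := J_inv Jb.
have : a = 1 - b by rewrite e1 addrK.
move=> ea; apply: (max_not1 hM); rewrite -hc -ea; exact: idL.
Qed.

Lemma max_prime M x y : maximal_ideal M -> ~ M x -> ~ M y -> exists r, ~ M (x * r * y).
Proof.
move=> hM nx ny; apply: contrapT => nex.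
have all : forall r, M (x * r * y).
  by move=> r; apply: contrapT => h; apply: nex; exists r.
have hM' := max_id hM.
pose T := fun z => forall r, M (z * r * y).
have hT : is_ideal T.
  split.
  - by move=> r; rewrite !mul0r; apply: id0.
  - by move=> z w hz hw r; rewrite !mulrBl; apply: idB.
  - by move=> s z hz r; rewrite -!mulrA; apply: idL => //; rewrite !mulrA.
  - by move=> s z hz r; rewrite -(mulrA z s r).
have hMT : subsetR M T by move=> z Mz r; rewrite -mulrA; apply: idR.
by have := max_grow hM hT hMT all nx => /(_ 1); rewrite !mul1r.
Qed.

Lemma max_two M e : maximal_ideal M -> (forall r, J (e * r * (1 - e))) -> M e \/ M (1 - e).
Proof.
move=> hM hJ; case: (pselect (M e)) => he; [by left|right].
apply: contrapT => h1; have [r hr] := max_prime hM he h1.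
by apply: hr; apply: J_sub_max.
Qed.
Definition idl u := fun x => exists s : seq (R * R), x = \sum_(p <- s) p.1 * u * p.2.

Lemma idl_ideal u : is_ideal (idl u).
Proof.
split.
- by exists [::]; rewrite big_nil.
- move=> x y [s1 ->] [s2 ->]; exists (s1 ++ map (fun p => (- p.1, p.2)) s2).
  rewrite big_cat big_map /= -sumrN; congr (_ + _); apply: eq_bigr => p _.
  by rewrite !mulNr.
- move=> r x [s ->]; exists (map (fun p => (r * p.1, p.2)) s).
  by rewrite big_map mulr_sumr; apply: eq_bigr => p _; rewrite !mulrA.
- move=> r x [s ->]; exists (map (fun p => (p.1, p.2 * r)) s).
  by rewrite big_map mulr_suml; apply: eq_bigr => p _; rewrite !mulrA.
Qed.

Lemma ideal_sum M u (s : seq (R * R)) : is_ideal M -> M u ->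
  M (\sum_(p <- s) p.1 * u * p.2).
Proof.
move=> hM hu; elim: s => [|p s IH]; first by rewrite big_nil; apply: id0.
by rewrite big_cons; apply: idD => //; apply: idLR.
Qed.

Lemma idl_self u : idl u u.
Proof. by exists [:: (1, 1)]; rewrite big_cons big_nil /= mul1r mulr1 addr0. Qed.

Lemma idl_sub M u : is_ideal M -> (subsetR (idl u) M <-> M u).
Proof.
move=> hM; split; first by move=> h; apply: h; apply: idl_self.
by move=> hu x [s ->]; apply: ideal_sum.
Qed.

Lemma full_not_max M u : maximal_ideal M -> full u -> ~ M u.
Proof.
move=> hM [s hs] hu; apply: (max_not1 hM); rewrite -hs.
by apply: ideal_sum => //; apply: max_id.
Qed.

Lemma not_max_full u : (forall M, maximal_ideal M -> ~ M u) -> full u.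
Proof.
move=> h; apply: contrapT => nf.
have [|M [hM sM]] := max_ideal_exists (idl_ideal u).
  by case=> s hs; apply: nf; exists s.
by apply: (h M hM); apply: sM; apply: idl_self.
Qed.
Lemma fwd2 M N : feckly_clean R -> maximal_ideal M -> maximal_ideal N ->
  (exists x, ~ (M x <-> N x)) ->
  exists a b, [/\ ~ M a, ~ N b & forall r, J (a * r * b)].
Proof.
move=> hF hM hN [x hx].
have hM' := max_id hM; have hN' := max_id hN.
have [m [n [Mm Nn e1]]] : sumI M N 1.
  apply: contrapT => n1.
  case: (hM) => _ _ Mmax.
  case: (Mmax _ (sumI_ideal hM' hN') (fun y My => sumI_l hN' My)) => // h.
  have NM : subsetR N M by move=> y Ny; apply: h; apply: sumI_r.
  case: (hN) => _ _ Nmax; case: (Nmax M hM' NM) => [MN|M1]; last by apply: (max_not1 hM).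
  by apply: hx; split; [apply: MN|apply: NM].
have [e [u [em fu hJ]]] := hF m.
exists e, (1 - e); split => //.
- move=> Me; apply: (full_not_max hM fu).
  have -> : u = m - e by rewrite em [e + u]addrC addrK.
  by apply: idB.
- move=> Ne; apply: (full_not_max hN fu).
  have -> : u = (1 - e) - n by rewrite e1 addrAC addrK em [e + u]addrC addrK.
  by apply: idB.
Qed.

Lemma fwd1 (hF : feckly_clean R) : strongly_zero_dimensional (@max_closed R).
Proof.
move=> A B [I [hI hA]] [K [hK hB]] disj.
have [i [k [Ii Kk e1]]] : sumI I K 1.
  apply: contrapT => n1.
  have [M [hM sM]] := max_ideal_exists (sumI_ideal hI hK) n1.
  apply: (disj (exist _ M hM)); split.
    by apply/hA => y Iy; apply: sM; apply: sumI_l.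
  by apply/hB => y Ky; apply: sM; apply: sumI_r.
have [e [u [ei fu hJ]]] := hF i.
have not_both : forall P : MaxSpec R, proj1_sig P e -> proj1_sig P (1 - e) -> False.
  by case=> M hM /= h1 h2; apply: (max_compl hM h1 h2).
have one : forall P : MaxSpec R, proj1_sig P e \/ proj1_sig P (1 - e).
  by case=> M hM /=; apply: max_two.
have cl : forall y, max_closed (fun P : MaxSpec R => proj1_sig P y).
  move=> y; exists (idl y); split; first exact: idl_ideal.
  by case=> M hM /=; rewrite idl_sub //; apply: max_id.
have eqC1 : forall P : MaxSpec R, ~ proj1_sig P (1 - e) <-> proj1_sig P e.
  move=> P; split; first by move=> h; case: (one P).
  by move=> h1 h2; apply: (not_both P).
have eqC2 : forall P : MaxSpec R, ~ proj1_sig P e <-> proj1_sig P (1 - e).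
  move=> P; split; first by move=> h; case: (one P).
  by move=> h1 h2; apply: (not_both P).
have clN : forall y y', (forall P : MaxSpec R, ~ proj1_sig P y <-> proj1_sig P y') ->
    max_closed (fun P : MaxSpec R => ~ proj1_sig P y).
  move=> y y' h; case: (cl y') => I' [hI' hP]; exists I'; split => // P.
  by rewrite h hP.
exists (fun P : MaxSpec R => proj1_sig P (1 - e)), (fun P : MaxSpec R => proj1_sig P e).
split.
- by split; [apply: cl|apply: (clN _ _ eqC1)].
- by split; [apply: cl|apply: (clN _ _ eqC2)].
- by move=> P [h1 h2]; apply: (not_both P).
- move=> [M hM] /hA /= IM; apply: (proj1 (eqC2 (exist _ M hM))) => /= Me.
  apply: (full_not_max hM fu).
  have -> : u = i - e by rewrite ei [e + u]addrC addrK.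
  by apply: idB; [apply: max_id|apply: IM|].
- move=> [M hM] /hB /= KM; apply: (proj1 (eqC1 (exist _ M hM))) => /= Me.
  apply: (full_not_max hM fu).
  have -> : u = (1 - e) - k by rewrite e1 addrAC addrK ei [e + u]addrC addrK.
  by apply: idB; [apply: max_id| |apply: KM].
Qed.
Lemma core a I K :
 is_ideal I -> is_ideal K ->
 (forall M, maximal_ideal M -> subsetR I M \/ subsetR K M) ->
 (forall M, maximal_ideal M -> subsetR I M -> subsetR K M -> False) ->
 (forall M, maximal_ideal M -> M a -> subsetR I M) ->
 (forall M, maximal_ideal M -> M (1 - a) -> subsetR K M) ->
 (forall M N, maximal_ideal M -> maximal_ideal N -> (exists x, ~ (M x <-> N x)) ->
    exists a b, [/\ ~ M a, ~ N b & forall r, J (a * r * b)]) ->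
 feckly_clean_elt a.
Proof.
move=> hI hK part disj XI YK H2.
have hJ := J_ideal.
pose B := fun b => exists d, I (1 - d) /\ forall r, J (d * r * b).
have hB : is_ideal B.
  split.
  - exists 1; split; first by rewrite subrr; apply: id0.
    by move=> r; rewrite mulr0; apply: (id0 hJ).
  - move=> x y [d1 [I1 J1]] [d2 [I2 J2]]; exists (d1 * d2); split.
      have -> : 1 - d1 * d2 = (1 - d1) + d1 * (1 - d2) by rewrite mulrBr mulr1 addrA subrK.
      by apply: idD => //; apply: idL.
    move=> r; rewrite mulrBr; apply: (idB hJ).
      by rewrite -(mulrA d1 d2 r); apply: J1.
    by rewrite -!mulrA; apply: (idL _ hJ); rewrite !mulrA; apply: J2.
  - move=> s x [d [Id Jd]]; exists d; split => // r.
    by rewrite mulrA -(mulrA d r s); apply: Jd.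
  - move=> s x [d [Id Jd]]; exists d; split => // r.
    by rewrite mulrA; apply: (idR _ hJ); apply: Jd.
have [k [beta [Kk Bb e1]]] : sumI K B 1.
  apply: contrapT => n1.
  have [N [hN sN]] := max_ideal_exists (sumI_ideal hK hB) n1.
  have KN : subsetR K N by move=> y Ky; apply: sN; apply: sumI_l.
  have BN : subsetR B N by move=> y By; apply: sN; apply: sumI_r.
  pose AN := fun x => exists b, ~ N b /\ forall r, J (x * r * b).
  have hAN : is_ideal AN.
    split.
    - exists 1; split; first exact: max_not1.
      by move=> r; rewrite !mul0r; apply: (id0 hJ).
    - move=> x y [b1 [nb1 J1]] [b2 [nb2 J2]].
      have [r0 hr0] := max_prime hN nb1 nb2.
      exists (b1 * r0 * b2); split => // r; rewrite !mulrBl; apply: (idB hJ).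
        by rewrite !mulrA; apply: (idR _ hJ); apply: (idR _ hJ); apply: J1.
      have -> : y * r * (b1 * r0 * b2) = y * (r * b1 * r0) * b2 by rewrite !mulrA.
      by apply: J2.
    - move=> s x [b [nb Jb]]; exists b; split => // r.
      by rewrite -!mulrA; apply: (idL _ hJ); rewrite !mulrA; apply: Jb.
    - move=> s x [b [nb Jb]]; exists b; split => // r.
      by rewrite -(mulrA x s r); apply: Jb.
  have [c [x [Ic [b [nb Jb]] e2]]] : sumI I AN 1.
    apply: contrapT => n2.
    have [M [hM sM]] := max_ideal_exists (sumI_ideal hI hAN) n2.
    have IM : subsetR I M by move=> y Iy; apply: sM; apply: sumI_l.
    have [|a0 [b0 [na0 nb0 J0]]] := H2 M N hM hN.
      apply: contrapT => nex; apply: (disj N hN) => // y Iy.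
      apply: contrapT => nNy; apply: nex; exists y; case=> h _; apply: nNy.
      by apply: h; apply: IM.
    by apply: na0; apply: sM; apply: sumI_r => //; exists b0; split.
  apply: nb; apply: BN; exists x; split => //.
  by have -> : 1 - x = c by rewrite e2 addrK.
case: Bb => d [Id Jd].
pose P := fun x => K x /\ forall r, J (x * r * beta).
pose Q := fun y => I y /\ forall x r, (forall t, J (x * t * beta)) -> J (x * r * y).
have hP : is_ideal P.
  split.
  - by split; [apply: id0|move=> r; rewrite !mul0r; apply: (id0 hJ)].
  - move=> x y [Kx Jx] [Ky Jy]; split; first by apply: idB.
    by move=> r; rewrite !mulrBl; apply: (idB hJ).
  - move=> s x [Kx Jx]; split; first by apply: idL.
    by move=> r; rewrite -!mulrA; apply: (idL _ hJ); rewrite !mulrA; apply: Jx.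
  - move=> s x [Kx Jx]; split; first by apply: idR.
    by move=> r; rewrite -(mulrA x s r); apply: Jx.
have hQ : is_ideal Q.
  split.
  - by split; [apply: id0|move=> x r _; rewrite mulr0; apply: (id0 hJ)].
  - move=> y z [Iy Jy] [Iz Jz]; split; first by apply: idB.
    by move=> x r hx; rewrite mulrBr; apply: (idB hJ); [apply: Jy|apply: Jz].
  - move=> s y [Iy Jy]; split; first by apply: idL.
    by move=> x r hx; rewrite mulrA -(mulrA x r s); apply: Jy.
  - move=> s y [Iy Jy]; split; first by apply: idR.
    by move=> x r hx; rewrite mulrA; apply: (idR _ hJ); apply: Jy.
have [e [f [Pe Qf e3]]] : sumI P Q 1.
  apply: contrapT => n3.
  have [M [hM sM]] := max_ideal_exists (sumI_ideal hP hQ) n3.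
  have PM : subsetR P M by move=> y Py; apply: sM; apply: sumI_l.
  have QM : subsetR Q M by move=> y Qy; apply: sM; apply: sumI_r.
  have hM' := max_id hM.
  case: (part M hM) => [IM|KM].
  - have [k0 [Kk0 nk0]] : exists k0, K k0 /\ ~ M k0.
      apply: contrapT => nex; apply: (disj M hM IM) => y Ky.
      by apply: contrapT => nMy; apply: nex; exists y; split.
    have nd : ~ M d by move=> Md; apply: (max_compl hM Md); apply: IM.
    have [r0 hr0] := max_prime hM nd nk0.
    apply: hr0; apply: PM; split; first by apply: idL.
    move=> t; have -> : d * r0 * k0 * t * beta = d * (r0 * k0 * t) * beta by rewrite !mulrA.
    by apply: Jd.
  - have [i0 [Ii0 ni0]] : exists i0, I i0 /\ ~ M i0.
      apply: contrapT => nex; apply: (disj M hM) => // y Iy.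
      by apply: contrapT => nMy; apply: nex; exists y; split.
    have nb : ~ M beta.
      by move=> Mb; apply: (max_not1 hM); rewrite e1; apply: idD => //; apply: KM.
    have [r0 hr0] := max_prime hM ni0 nb.
    apply: hr0; apply: QM; split; first by apply: idR => //; apply: idR.
    move=> x r hx.
    have -> : x * r * (i0 * r0 * beta) = x * (r * i0 * r0) * beta by rewrite !mulrA.
    by apply: hx.
have ef : 1 - e = f by rewrite e3 [e + f]addrC addrK.
exists e, (a - e); split.
- by rewrite addrC subrK.
- apply: not_max_full => M hM Mu.
  have hM' := max_id hM.
  case: (part M hM) => [IM|KM].
  + have Mf : M f by apply: IM; case: Qf.
    have : M (1 - a).
      have -> : 1 - a = f - (a - e) by rewrite -ef opprB addrA subrK.
      by apply: idB.
    by move/(YK M hM) => KM; apply: (disj M hM IM KM).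
  + have Me : M e by apply: KM; case: Pe.
    have Ma : M a by rewrite -(subrK e a); apply: idD.
    by apply: (disj M hM (XI M hM Ma) KM).
- move=> r; rewrite ef; case: Qf => _ hf; apply: hf; by case: Pe.
Qed.
End Ring.

Theorem corollary3p6 (R : pzRingType) :
  feckly_clean R <->
  (strongly_zero_dimensional (@max_closed R) /\
   (forall M N : MaxSpec R, (exists x : R, ~ (proj1_sig M x <-> proj1_sig N x)) ->
      exists a b : R, [/\ ~ proj1_sig M a, ~ proj1_sig N b &
                         forall r : R, jacobson (a * r * b)])).
Proof.
split.
  move=> hF; split; first exact: fwd1.
  move=> [M hM] [N hN] /= hx.
  have [a [b [h1 h2 h3]]] := fwd2 hF hM hN hx.
  by exists a, b; split.
case=> H1 H2 a.
have cl : forall y : R, max_closed (fun P : MaxSpec R => proj1_sig P y).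
  move=> y; exists (idl y); split; first exact: idl_ideal.
  by case=> M hM /=; rewrite idl_sub //; apply: max_id.
have disjXY : forall P : MaxSpec R, ~ (proj1_sig P a /\ proj1_sig P (1 - a)).
  by case=> M hM /= [h1 h2]; apply: (max_compl hM h1 h2).
have [C1 [C2 [[cC1 cnC1] _ dis XC1 YC2]]] := H1 _ _ (cl a) (cl (1 - a)) disjXY.
case: cC1 => I [hI eI]; case: cnC1 => K [hK eK].
apply: (core hI hK).
- move=> M hM; case: (pselect (C1 (exist _ M hM))) => h.
    by left; apply: (proj1 (eI (exist _ M hM))).
  by right; apply: (proj1 (eK (exist _ M hM))).
- move=> M hM IM KM.
  have h1 := proj2 (eI (exist _ M hM)) IM.
  have h2 := proj2 (eK (exist _ M hM)) KM.
  exact: h2 h1.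
- move=> M hM Ma; apply: (proj1 (eI (exist _ M hM))); apply: XC1; exact: Ma.
- move=> M hM Ma; apply: (proj1 (eK (exist _ M hM))) => c1.
  by apply: (dis (exist _ M hM)); split; [exact: c1|apply: YC2; exact: Ma].
- move=> M N hM hN hx.
  have [a0 [b0 [h1 h2 h3]]] := H2 (exist _ M hM) (exist _ N hN) hx.
  by exists a0, b0; split.
Qed.
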